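(* Let $n,g,k$ be integers with $g\geq 1$ and $1\leq k\leq n-2g-2$. Then the minimum number of edges of a connected graph $G$ of order $n$ having an $R_g$-cutset with $\kappa_g(G)=k$ equals $n-1$; that is, $s(n,k)=n-1$.
   Context: All graphs are finite and simple. A set $S\subseteq V(G)$ is a cutset if $G-S$ is disconnected. For a non-negative integer $g$, a cutset $S$ is an $R_g$-cutset if every connected component of $G-S$ has at least $g+1$ vertices. If $G$ has at least one $R_g$-cutset, the $g$-extra connectivity $\kappa_g(G)$ is the minimum cardinality of an $R_g$-cutset of $G$. For fixed $g$, $s(n,k)=\min\{|E(G)|: G \text{ connected of order } n,\ \kappa_g(G)=k\}$. *)

(* Defs.v *)
From mathcomp Require Import all_boot.
Set Implicit Arguments. Unset Strict Implicit. Unset Printing Implicit Defensive.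

Definition simple_graph (n : nat) (e : rel 'I_n) : Prop :=
  symmetric e /\ irreflexive e.

Definition num_edges (n : nat) (e : rel 'I_n) : nat :=
  #|[set p : 'I_n * 'I_n | e p.1 p.2 && (p.1 < p.2)]|.

Definition connected_graph (n : nat) (e : rel 'I_n) : Prop :=
  forall x y : 'I_n, connect e x y.

Definition del_rel (n : nat) (e : rel 'I_n) (S : {set 'I_n}) : rel 'I_n :=
  fun x y => [&& e x y, x \notin S & y \notin S].

Definition comp_of (n : nat) (e : rel 'I_n) (S : {set 'I_n}) (x : 'I_n) : {set 'I_n} :=
  [set y | (y \notin S) && connect (del_rel e S) x y].

Definition is_cutset (n : nat) (e : rel 'I_n) (S : {set 'I_n}) : Prop :=
  exists x y : 'I_n, [/\ x \notin S, y \notin S & ~~ connect (del_rel e S) x y].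

Definition is_Rg_cutset (g n : nat) (e : rel 'I_n) (S : {set 'I_n}) : Prop :=
  is_cutset e S /\ forall x : 'I_n, x \notin S -> g.+1 <= #|comp_of e S x|.

Definition kappa_g_eq (g n : nat) (e : rel 'I_n) (k : nat) : Prop :=
  (exists S : {set 'I_n}, is_Rg_cutset g e S /\ #|S| = k) /\
  (forall S : {set 'I_n}, is_Rg_cutset g e S -> k <= #|S|).

(* Main.v *)
Require Import Defs.
From mathcomp Require Import all_boot zify.
Set Implicit Arguments. Unset Strict Implicit. Unset Printing Implicit Defensive.

Definition parn (k g v : nat) : nat :=
  if v <= k.+1 then 0 else if v <= k + g + 1 then k else k.+1.

Definition te (N k g : nat) : rel 'I_N :=
  fun x y => ((0 < x) && (parn k g x == y)) || ((0 < y) && (parn k g y == x)).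

Arguments te : clear implicits.

Lemma parn_lt k g v : 0 < v -> parn k g v < v.
Proof. rewrite /parn; case: ifP => ?; [lia| case: ifP => ?; lia]. Qed.

Lemma parn_le k g v : parn k g v <= k.+1.
Proof. rewrite /parn; case: ifP => ?; [lia| case: ifP => ?; lia]. Qed.

Lemma te_sym N k g : symmetric (te N k g).
Proof. by move=> x y; rewrite /te orbC. Qed.

Lemma te_irr N k g : irreflexive (te N k g).
Proof.
move=> x; rewrite /te orbb; apply/negP => /andP [h /eqP e].
by have := parn_lt k g h; rewrite e ltnn.
Qed.

Lemma card_range n lo hi : hi <= n.+1 ->
  #|[set v : 'I_n.+1 | lo <= v < hi]| = hi - lo.
Proof.
move=> hn.
have -> : [set v : 'I_n.+1 | lo <= v < hi] =
          (fun i : 'I_(hi - lo) => inord (lo + i) : 'I_n.+1) @: [set: 'I_(hi - lo)].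
  apply/setP => v; rewrite inE; apply/idP/imsetP.
  - move=> /andP [h1 h2].
    have hi' : v - lo < hi - lo by lia.
    exists (Ordinal hi'); first by rewrite inE.
    apply: val_inj; rewrite /= inordK; lia.
  - case=> i _ ->; have := ltn_ord i => hi0; rewrite inordK; lia.
rewrite card_imset ?cardsT ?card_ord //.
move=> i j /(congr1 val) /= h.
have hi0 := ltn_ord i; have hj := ltn_ord j.
rewrite !inordK in h; try lia.
by apply: val_inj => /=; lia.
Qed.

Lemma num_edges_te n k g : num_edges (te n.+1 k g) = n.
Proof.
rewrite /num_edges.
have -> : [set p : 'I_n.+1 * 'I_n.+1 | te n.+1 k g p.1 p.2 && (p.1 < p.2)] =
   (fun y : 'I_n.+1 => (inord (parn k g y) : 'I_n.+1, y)) @: [set~ ord0].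
  apply/setP => [[a b]]; rewrite inE /=; apply/idP/imsetP.
  - rewrite /te => /andP [/orP [/andP [a0 /eqP pa]|/andP [b0 /eqP pb]] ab].
      by have := parn_lt k g a0; lia.
    exists b; first by rewrite !inE; apply/eqP => /(congr1 val) /=; lia.
    congr pair; apply: val_inj; rewrite /= inordK ?pb //.
  - case=> y; rewrite !inE => y0 [-> ->].
    have yp : 0 < y by case: y y0 => [[]].
    have hp := parn_lt k g yp; have := ltn_ord y => hy.
    rewrite /te inordK; last lia.
    by rewrite yp eqxx orbT hp.
rewrite card_imset ?cardsC1 ?card_ord //.
by move=> y1 y2 [].
Qed.

Lemma iso_card n (e : rel 'I_n) S x :
  (forall y, ~~ del_rel e S x y) -> #|comp_of e S x| <= 1.
Proof.
move=> h; rewrite -(cards1 x); apply: subset_leq_card; apply/subsetP => y.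
rewrite !inE => /andP [_ /connectP [[|z p] /= pp ->]] //.
by move: pp; rewrite (negbTE (h z)).
Qed.

Lemma parn_cases k g v : [\/ parn k g v = 0, parn k g v = k | parn k g v = k.+1].
Proof. rewrite /parn; case: ifP => _; [exact: Or31|case: ifP => _; [exact: Or32|exact: Or33]]. Qed.

Lemma leaf_nbr n k g (x y : 'I_n.+1) : 0 < x -> x != k :> nat -> x != k.+1 :> nat ->
  te n.+1 k g x y -> val y = parn k g x.
Proof.
move=> x0 xk xk1; rewrite /te x0 /= => /orP [/eqP -> //|/andP [_ /eqP h]].
by case: (parn_cases k g y) => e; rewrite e in h; move: x0 xk xk1; rewrite -h ?eqxx.
Qed.

Lemma forced n k g S (x y : 'I_n.+1) : 1 <= g ->
  is_Rg_cutset g (te n.+1 k g) S -> x \notin S -> 0 < x -> x != k :> nat ->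
  x != k.+1 :> nat -> val y = parn k g x -> y \notin S.
Proof.
move=> g1 [_ hc] xS x0 xk xk1 yp; apply/negP => yS.
have := hc x xS.
have : #|comp_of (te n.+1 k g) S x| <= 1.
  apply: iso_card => w; apply/negP; rewrite /del_rel => /and3P [ex _ wS].
  have : w = y by apply: val_inj; rewrite yp (leaf_nbr x0 xk xk1 ex).
  by move=> ew; rewrite ew yS in wS.
lia.
Qed.

Lemma te_conn n k g : connected_graph (te n.+1 k g).
Proof.
have h0 : forall v : 'I_n.+1, connect (te n.+1 k g) ord0 v.
  move=> v; have [m] := ubnP (v : nat); elim: m v => // m IH v vm.
  have [v0|v0] := posnP v.
    by have -> : v = ord0 by apply: val_inj.
  have hp := parn_lt k g v0; have hv := ltn_ord v.
  pose p : 'I_n.+1 := inord (parn k g v).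
  have pv : p = parn k g v :> nat by rewrite /p inordK //; lia.
  have hpm : p < m by rewrite pv; lia.
  apply: (connect_trans (IH p hpm)).
  apply: connect1; by rewrite /te v0 pv eqxx orbT.
move=> x y; apply: (connect_trans (y := ord0)) => //.
by rewrite (sym_connect_sym (@te_sym n.+1 k g)).
Qed.

Lemma parn_small k g v : v <= k.+1 -> parn k g v = 0.
Proof. by rewrite /parn => ->. Qed.

Lemma parn_big k g v : 1 <= k -> parn k g v <> 0 -> k.+1 < v.
Proof. rewrite /parn; case: ifP => ?; [by []|case: ifP => ?; lia]. Qed.

Lemma del_sym n k g S : symmetric (del_rel (te n.+1 k g) S).
Proof. by move=> x y; rewrite /del_rel te_sym; congr andb; apply: andbC. Qed.

Lemma lower n k g S : 1 <= g -> 1 <= k -> k <= n.+1 ->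
  is_Rg_cutset g (te n.+1 k g) S -> k <= #|S|.
Proof.
move=> g1 k1 kn hS.
pose D := del_rel (te n.+1 k g) S.
have r0 : (ord0 : 'I_n.+1) \in S.
  apply/negPn/negP => r0.
  have hc : forall x, x \notin S -> connect D ord0 x.
    move=> x xS; have [x0|x0] := posnP x.
      by have -> : x = ord0 by apply: val_inj.
    have hx := ltn_ord x; have hp := parn_lt k g x0.
    have [px|px] := eqVneq (parn k g x) 0.
      by apply: connect1; rewrite /D /del_rel r0 xS /te x0 px eqxx orbT.
    have xb := parn_big k1 (elimN eqP px).
    pose p : 'I_n.+1 := inord (parn k g x).
    have pv : p = parn k g x :> nat by rewrite /p inordK //; lia.
    have pS : p \notin S.
      apply: (forced g1 hS xS x0) => //; apply/eqP; lia.
    have p0 : 0 < p by rewrite pv lt0n px.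
    have pp : parn k g p = 0 by apply: parn_small; rewrite pv; apply: parn_le.
    apply: (connect_trans (y := p)); apply: connect1.
      by rewrite /D /del_rel r0 pS /te p0 pp eqxx orbT.
    by rewrite /D /del_rel pS xS /te x0 pv eqxx orbT.
  case: hS => [[x [y [xS yS nxy]]] _].
  have cxy : connect D x y.
    apply: (connect_trans (y := ord0)); last exact: hc.
    by rewrite (sym_connect_sym (@del_sym n k g S)); exact: hc.
  by rewrite cxy in nxy.
have sub : [set v : 'I_n.+1 | 0 <= v < k] \subset S.
  apply/subsetP => v; rewrite inE => /andP [_ vk].
  have [v0|v0] := posnP v.
    by have -> : v = ord0 by apply: val_inj.
  apply/negPn/negP => vS.
  have := forced (y := ord0) g1 hS vS v0.
  rewrite r0 /= parn_small; last lia.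
  move=> h; suff : false by []; apply: h => //; apply/eqP; lia.
by have := subset_leq_card sub; rewrite card_range // subn0.
Qed.

Lemma exist_cut n k g : 1 <= g -> 1 <= k -> k + 2 * g + 2 <= n.+1 ->
  is_Rg_cutset g (te n.+1 k g) [set v : 'I_n.+1 | 0 <= v < k] /\
  #|[set v : 'I_n.+1 | 0 <= v < k]| = k.
Proof.
move=> g1 k1 hn.
split; last by rewrite card_range ?subn0 //; lia.
set S0 := [set v : 'I_n.+1 | 0 <= v < k].
pose D := del_rel (te n.+1 k g) S0.
have inS0 v : (v \in S0) = (v < k) by rewrite inE.
pose xk : 'I_n.+1 := inord k.
pose xk1 : 'I_n.+1 := inord k.+1.
have vk : xk = k :> nat by rewrite /xk inordK //; lia.
have vk1 : xk1 = k.+1 :> nat by rewrite /xk1 inordK //; lia.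
have comp_sub x h (R : {set 'I_n.+1}) : x \notin S0 -> h \notin S0 -> connect D x h ->
    (forall w, w \in R -> (w \notin S0) && te n.+1 k g h w) ->
    h |: R \subset comp_of (te n.+1 k g) S0 x.
  move=> xS hS hxh H; apply/subsetP => w; rewrite !inE => /predU1P [->|wR].
    by rewrite -inS0 hS hxh.
  have /andP [wS hw] := H w wR; rewrite -inS0 wS /=.
  apply: (connect_trans hxh); apply: connect1.
  by rewrite /D /del_rel hw hS wS.
split.
- exists xk, xk1; rewrite !inS0 vk vk1 ltnn ltnNge leqnSn; split => //.
  pose A := [set v : 'I_n.+1 | (v == k :> nat) || (k.+2 <= v <= k + g + 1)].
  have cl1 u w : D u w -> u \in A -> w \in A.
    rewrite /D /del_rel !inS0 !inE /te => /and3P [/orP [/andP [u0 /eqP h]|/andP [w0 /eqP h]] uS wS];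
    move: h; rewrite /parn; repeat case: ifP => ?; lia.
  have clA : closed D A.
    move=> u w Duw; apply/idP/idP; apply: cl1 => //.
    by move: Duw; rewrite /D del_sym.
  apply/negP => /(closed_connect clA).
  by rewrite !inE vk vk1 eqxx /=; lia.
- move=> x; rewrite inS0 -leqNgt => kx.
  have hx := ltn_ord x.
  have [xA|xA] := boolP ((x == k :> nat) || (k.+2 <= x <= k + g + 1)).
  + pose R := [set v : 'I_n.+1 | k.+2 <= v < k + g + 2].
    have h1 : x \notin S0 by rewrite inS0 -leqNgt.
    have h2 : xk \notin S0 by rewrite inS0 vk ltnn.
    have h3 : connect D x xk.
      have [xe|xe] := eqVneq (x : nat) k.
        by have -> : x = xk by apply: val_inj; rewrite /= vk.
      apply: connect1; rewrite /D /del_rel !inS0 vk ltnn -leqNgt kx /= /te.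
      have -> : 0 < x by lia.
      rewrite vk /parn; repeat case: ifP => ?; lia.
    have h4 : forall w, w \in R -> (w \notin S0) && te n.+1 k g xk w.
      move=> w; rewrite inE inS0 => wR; rewrite /te vk.
      have -> : 0 < w by lia.
      rewrite /parn; repeat case: ifP => ?; lia.
    have := subset_leq_card (comp_sub x xk R h1 h2 h3 h4).
    rewrite cardsU1 card_range; last lia.
    have -> : xk \notin R by rewrite inE vk; lia.
    move=> h; apply: leq_trans h => /=; lia.
  + pose R := [set v : 'I_n.+1 | k + g + 2 <= v < n.+1].
    have h1 : x \notin S0 by rewrite inS0 -leqNgt.
    have h2 : xk1 \notin S0 by rewrite inS0 vk1; lia.
    have h3 : connect D x xk1.
      have [xe|xe] := eqVneq (x : nat) k.+1.
        by have -> : x = xk1 by apply: val_inj; rewrite /= vk1.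
      apply: connect1; rewrite /D /del_rel !inS0 vk1 -leqNgt kx /= /te.
      have -> : 0 < x by lia.
      rewrite vk1 /parn; repeat case: ifP => ?; lia.
    have h4 : forall w, w \in R -> (w \notin S0) && te n.+1 k g xk1 w.
      move=> w; rewrite inE inS0 => wR; rewrite /te vk1.
      have -> : 0 < w by lia.
      rewrite /parn; repeat case: ifP => ?; lia.
    have := subset_leq_card (comp_sub x xk1 R h1 h2 h3 h4).
    rewrite cardsU1 card_range; last lia.
    have -> : xk1 \notin R by rewrite inE vk1; lia.
    move=> h; apply: leq_trans h => /=; lia.
Qed.
Lemma connected_edges n (e : rel 'I_n) :
  simple_graph e -> connected_graph e -> n - 1 <= num_edges e.
Proof.
case: n e => [|n] e [se ie] ce; first done.
pose r := (ord0 : 'I_n.+1).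
pose P (y : 'I_n.+1) m := [exists p : m.-tuple 'I_n.+1, path e r p && (last r p == y)].
have Pex y : exists m, P y m.
  have /connectP [p pp ->] := ce r y.
  exists (size p); apply/existsP; exists (in_tuple p); by rewrite /= pp eqxx.
pose d y := ex_minn (Pex y).
have key y : y != r -> exists z, e z y && (d z < d y).
  move=> yr; rewrite /d; case: ex_minnP => m /existsP [p /andP [pp /eqP pl]] minm.
  move: (tuple.size_tuple p) pp pl; case/lastP: (tval p) => [|q z] /=.
    by move=> _ _ py; rewrite -py eqxx in yr.
  rewrite size_rcons rcons_path last_rcons => <- /andP [pq ez] zy.
  exists (last r q); rewrite -zy ez /=.
  case: ex_minnP => m' _ minm'.
  have : P (last r q) (size q).
    apply/existsP; exists (in_tuple q); by rewrite /= pq eqxx.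
  by move/minm'; rewrite ltnS.
have [par Hpar] : exists par : 'I_n.+1 -> 'I_n.+1,
    forall y, y != r -> e (par y) y && (d (par y) < d y).
  exists (fun y => odflt r [pick z | e z y && (d z < d y)]) => y yr.
  case: pickP => [z Hz|H] //=.
  by case: (key y yr) => z Hz; rewrite H in Hz.
pose f y := if (par y < y)%N then (par y, y) else (y, par y).
have finj : {in [set~ r] &, injective f}.
  move=> y1 y2; rewrite !inE => h1 h2; rewrite /f.
  have /andP [_ d1] := Hpar _ h1; have /andP [_ d2] := Hpar _ h2.
  case: ifP => _; case: ifP => _ [] a b //.
  - by move: d2; rewrite -b -a => d2; have := ltn_trans d1 d2; rewrite ltnn.
  - by move: d2; rewrite -a -b => d2; have := ltn_trans d1 d2; rewrite ltnn.
have sub : f @: [set~ r] \subset [set p : 'I_n.+1 * 'I_n.+1 | e p.1 p.2 && (p.1 < p.2)].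
  apply/subsetP => p /imsetP [y]; rewrite !inE => yr ->.
  have /andP [ey _] := Hpar _ yr.
  rewrite /f; case: ifP => /= h; first by rewrite ey h.
  rewrite se ey /=.
  have : par y != y by apply: contraTneq ey => ->; rewrite ie.
  move=> /eqP neq; have : (par y : nat) <> y by move=> /val_inj.
  lia.
have := subset_leq_card sub; rewrite card_in_imset // cardsC1 card_ord /num_edges.
by rewrite subn1.
Qed.

Theorem proposition5p1 (n g k : nat) (hg : 1 <= g) (hk1 : 1 <= k)
    (hk2 : k <= n - 2 * g - 2) :
  (exists e : rel 'I_n,
      [/\ simple_graph e, connected_graph e, kappa_g_eq g e k &
          num_edges e = n - 1]) /\
  (forall e : rel 'I_n,
      simple_graph e -> connected_graph e -> kappa_g_eq g e k ->
      n - 1 <= num_edges e).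
Proof.
split; last by move=> e se ce _; exact: connected_edges.
case: n hk2 => [|n] hk2; first by lia.
have hn : k + 2 * g + 2 <= n.+1 by lia.
exists (te n.+1 k g); split.
- by split; [exact: te_sym|exact: te_irr].
- exact: te_conn.
- split; first by exists [set v : 'I_n.+1 | 0 <= v < k]; exact: exist_cut.
  by move=> S hS; apply: lower hS => //; lia.
- by rewrite num_edges_te subn1.
Qed.
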